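(* Let $G,H$ be graded groups, $U\subset G$ open and $\Phi:U\to H$ a smooth map. Then $\Phi$ is uniformly Pansu differentiable on $U$ if and only if for each $x\in U$, each $i,j\ge1$ and each $V\in\mathfrak g_j$, the limit of $$\varepsilon^{-i}\,\mathrm{pr}_{\mathfrak h,i}\circ\ln_H\big(\Phi_x(\exp_G(\varepsilon^jV))\big)$$ as $\varepsilon\to0^+$ exists, and, for each $i,j$, these limits hold locally uniformly on $U\times\mathfrak g_j$.
   Context: A graded group is a connected, simply connected nilpotent real Lie group $G$ whose Lie algebra $\mathfrak g=\bigoplus_{j\ge1}\mathfrak g_j$ (finitely many nonzero) satisfies $[\mathfrak g_i,\mathfrak g_j]\subset\mathfrak g_{i+j}$; $\exp_G$ is a global diffeomorphism with inverse $\ln_G$. Dilations: $\delta_rX=r^jX$ for $X\in\mathfrak g_j$, $r>0$, and $\delta_r(\exp_GX)=\exp_G(\delta_rX)$. $H$ is a graded group with Lie algebra $\mathfrak h=\bigoplus_j\mathfrak h_j$; $\mathrm{pr}_{\mathfrak h,i}$ is the projection onto $\mathfrak h_i$ along $\bigoplus_{j\neq i}\mathfrak h_j$. Notation: $\Phi_x(y):=\Phi(x)^{-1}\Phi(xy)$. $\Phi$ is Pansu differentiable at $x\in U$ if for every $z\in G$ the limit $\mathrm{PD}_x\Phi(z)=\lim_{\varepsilon\to0^+}\delta_{\varepsilon^{-1}}(\Phi(x)^{-1}\Phi(x\delta_\varepsilon z))$ exists; uniformly Pansu differentiable on $U$ means Pansu differentiable at every $x\in U$ with the limit holding locally uniformly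 on $U\times G$. *)

(* Defs.v *)
From HB Require Import structures.
From mathcomp Require Import all_boot all_order all_algebra.
From mathcomp Require Import all_classical all_reals all_analysis.
Set Implicit Arguments. Unset Strict Implicit. Unset Printing Implicit Defensive.
Import Order.TTheory GRing.Theory Num.Theory.
Import numFieldNormedType.Exports.
Local Open Scope classical_set_scope.
Local Open Scope ring_scope.

Section GradedDefs.
Variable R : realType.

Fixpoint iterD (n m : nat) (vs : seq 'rV[R]_n) (f : 'rV[R]_n -> 'rV[R]_m)
  : 'rV[R]_n -> 'rV[R]_m :=
  match vs with
  | [::] => f
  | v :: vs' => fun x => derive (iterD vs' f) x v
  end.

Definition smooth_on (n m : nat) (U : set 'rV[R]_n) (f : 'rV[R]_n -> 'rV[R]_m) :=
  forall vs : seq 'rV[R]_n,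
    (forall x, U x -> {for x, continuous (iterD vs f)}) /\
    (forall v x, U x -> derivable (iterD vs f) x v).

Definition dil (n : nat) (deg : 'I_n -> nat) (r : R) (x : 'rV[R]_n) : 'rV[R]_n :=
  \row_k (r ^+ deg k * x ord0 k).

(* A graded group, in exponential coordinates w.r.t. a basis adapted to the
   grading: the carrier R^n is identified with the Lie algebra via exp_G,
   so exp_G = ln_G = id; layer g_j = span of the basis vectors e_k with
   deg k = j. *)
Record graded_group := GradedGroup {
  gdim : nat;
  gdeg : 'I_gdim -> nat;
  gmul : 'rV[R]_gdim -> 'rV[R]_gdim -> 'rV[R]_gdim;
  gdeg_pos : forall k, (0 < gdeg k)%N;
  gmulA : forall x y z, gmul x (gmul y z) = gmul (gmul x y) z;
  gmul0x : forall x, gmul 0 x = x;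
  gmulx0 : forall x, gmul x 0 = x;
  gmulN : forall x, gmul x (- x) = 0;
  (* t |-> t x is the one-parameter subgroup with velocity x: exp = id *)
  gmul_line : forall x (s t : R), gmul (s *: x) (t *: x) = (s + t) *: x;
  gmul_dil : forall r : R, 0 < r -> forall x y,
      dil gdeg r (gmul x y) = gmul (dil gdeg r x) (dil gdeg r y);
  gmul_smooth : smooth_on setT
      (fun z : 'rV[R]_(gdim + gdim) => gmul (lsubmx z) (rsubmx z))
}.

Variables G H : graded_group.

(* Phi_x(y) = Phi(x)^{-1} Phi(x y) ; the inverse is -w in exp coordinates *)
Definition transl (Phi : 'rV[R]_(gdim G) -> 'rV[R]_(gdim H)) x y :=
  @gmul H (- Phi x) (Phi (@gmul G x y)).

Definition pr_layer (i : nat) (w : 'rV[R]_(gdim H)) : 'rV[R]_(gdim H) :=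
  \row_k (if @gdeg H k == i then w ord0 k else 0).

Definition in_layer (j : nat) (V : 'rV[R]_(gdim G)) :=
  forall k, @gdeg G k != j -> V ord0 k = 0.

End GradedDefs.

Definition loc_unif_cvg0 (R : realType) (T : topologicalType) (m : nat)
  (D : set T) (F : R -> T -> 'rV[R]_m) (L : T -> 'rV[R]_m) :=
  forall p, D p -> exists2 W, nbhs p W &
    forall e : R, 0 < e ->
      \forall eps \near 0^'+, forall q, W q -> D q -> `|F eps q - L q| < e.

Definition unif_Pansu_diff (R : realType) (G H : graded_group R)
  (U : set 'rV[R]_(gdim G)) (Phi : 'rV[R]_(gdim G) -> 'rV[R]_(gdim H)) :=
  exists PD : 'rV[R]_(gdim G) -> 'rV[R]_(gdim G) -> 'rV[R]_(gdim H),
    loc_unif_cvg0 (fun p : 'rV[R]_(gdim G) * 'rV[R]_(gdim G) => U p.1)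
      (fun eps p => dil (@gdeg R H) eps^-1 (transl Phi p.1 (dil (@gdeg R G) eps p.2)))
      (fun p => PD p.1 p.2).

(* Main.v *)
Require Import Defs.
From HB Require Import structures.
From mathcomp Require Import all_boot all_order all_algebra.
From mathcomp Require Import all_classical all_reals all_analysis.
From mathcomp Require Import ring lra.
Import Order.TTheory GRing.Theory Num.Theory.
Import numFieldNormedType.Exports.
Local Open Scope classical_set_scope.
Local Open Scope ring_scope.
Set Implicit Arguments. Unset Strict Implicit. Unset Printing Implicit Defensive.
Section Norms.
Variable R : realType.

Lemma mxE_le (m n : nat) (M : 'M[R]_(m, n)) i j : `|M i j| <= `|M|.
Proof.
rewrite [X in _ <= X]/Num.norm /= mx_normrE.
exact: (le_bigmax _ (fun ij : 'I_m * 'I_n => `|M ij.1 ij.2|) (i, j)).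
Qed.

Lemma mx_norm_le (m n : nat) (M : 'M[R]_(m, n)) e :
  0 <= e -> (forall i j, `|M i j| <= e) -> `|M| <= e.
Proof.
move=> e0 H; rewrite [X in X <= _]/Num.norm /= mx_normrE.
by apply: bigmax_le => // -[i j] _; exact: H.
Qed.

Lemma mx_norm_lt (m n : nat) (M : 'M[R]_(m, n)) e :
  0 < e -> (forall i j, `|M i j| < e) -> `|M| < e.
Proof.
move=> e0 H; rewrite [X in X < _]/Num.norm /= mx_normrE.
by apply: bigmax_lt => // -[i j] _; exact: H.
Qed.

End Norms.
Section GroupAlg.
Variable R : realType.
Variable G : graded_group R.
Local Notation n := (gdim G).
Local Notation mul := (@gmul R G).
Local Notation deg := (@gdeg R G).

Lemma gmulNl (x : 'rV[R]_n) : mul (- x) x = 0.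
Proof.
have := gmulN (- x); rewrite opprK => H.
have : mul (mul (- x) x) (mul (- x) (- - x)) = mul (-x) (- - x).
  by rewrite gmulA -[mul (mul (-x) x) (-x)]gmulA gmulN gmulx0.
by rewrite opprK H gmulx0.
Qed.

Lemma gmulK (x y : 'rV[R]_n) : mul x (mul (- x) y) = y.
Proof. by rewrite gmulA gmulN gmul0x. Qed.

Lemma gmulNK (x y : 'rV[R]_n) : mul (- x) (mul x y) = y.
Proof. by rewrite gmulA gmulNl gmul0x. Qed.

Lemma dil0 (r : R) : dil deg r (0 : 'rV[R]_n) = 0.
Proof. by apply/rowP => k; rewrite !mxE mulr0. Qed.

Lemma dil0r (x : 'rV[R]_n) : dil deg 0 x = 0.
Proof.
apply/rowP => k; rewrite !mxE expr0n.
by case: (deg k) (gdeg_pos k) => //= ? _; rewrite mul0r.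
Qed.

Lemma dil_layer j (r : R) (V : 'rV[R]_n) : in_layer j V -> dil deg r V = r ^+ j *: V.
Proof.
move=> HV; apply/rowP => k; rewrite !mxE.
case: (eqVneq (deg k) j) => [->//|/HV ->]; by rewrite !mulr0.
Qed.

End GroupAlg.
Section Transl.
Variable R : realType.
Variables G H : graded_group R.
Variable Phi : 'rV[R]_(gdim G) -> 'rV[R]_(gdim H).

Definition Fe (eps : R) (x z : 'rV[R]_(gdim G)) : 'rV[R]_(gdim H) :=
  dil (@gdeg R H) eps^-1 (transl Phi x (dil (@gdeg R G) eps z)).

Lemma transl_cocycle x y w :
  transl Phi x (gmul y w) = gmul (transl Phi x y) (transl Phi (gmul x y) w).
Proof. by rewrite /transl -gmulA gmulK gmulA. Qed.

Lemma Fe_cocycle (eps : R) x y w : 0 < eps ->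
  Fe eps x (gmul y w) = gmul (Fe eps x y) (Fe eps (gmul x (dil (@gdeg R G) eps y)) w).
Proof.
move=> e0; rewrite /Fe gmul_dil // transl_cocycle gmul_dil //.
by rewrite invr_gt0.
Qed.

Lemma Fe0 eps x : Fe eps x 0 = 0.
Proof. by rewrite /Fe dil0 /transl gmulx0 gmulNl dil0. Qed.

End Transl.
Section Deriv.
Variable R : realType.

Lemma line_derivable (m p : nat) (f : 'rV[R]_m -> 'rV[R]_p) z0 w (s : R) :
  derivable f (s *: w + z0) w ->
  derivable (fun t : R => f (t *: w + z0)) s 1 /\
  derive (fun t : R => f (t *: w + z0)) s 1 = derive f (s *: w + z0) w.
Proof.
have E : (fun h : R => h^-1 *: (((fun t : R => f (t *: w + z0)) \o shift s) (h *: 1)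
             - (fun t : R => f (t *: w + z0)) s)) =
         (fun h : R => h^-1 *: ((f \o shift (s *: w + z0)) (h *: w) - f (s *: w + z0))).
  apply/funext => h /=; congr (_ *: (f _ - _)).
  by rewrite /shift /= scalerDl [h *: 1]mulr1 addrA.
by rewrite /derivable /derive E.
Qed.

Lemma coord_derive (p : nat) (g : R -> 'rV[R]_p) (s : R) k :
  derivable g s 1 -> is_derive s 1 (fun t => g t ord0 k) (derive g s 1 ord0 k).
Proof.
move=> dg.
have C : (fun h : R => h^-1 *: (((fun t => g t ord0 k) \o shift s) (h *: 1) - g s ord0 k))
   @ 0^' --> derive g s 1 ord0 k.
  have E : (fun h : R => h^-1 *: (((fun t => g t ord0 k) \o shift s) (h *: 1) - g s ord0 k))
     = (fun M : 'rV[R]_p => M ord0 k) \o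
       (fun h : R => h^-1 *: ((g \o shift s) (h *: 1) - g s)).
    by apply/funext => h /=; rewrite !mxE.
  rewrite E; apply: continuous_cvg; first exact: coord_continuous.
  exact: dg.
apply: DeriveDef; first exact: (cvgP _ C).
exact: (cvg_lim _ C).
Qed.

End Deriv.
Section Struct.
Variable R : realType.
Variable G : graded_group R.
Local Notation n := (gdim G).
Local Notation mul := (@gmul R G).
Local Notation deg := (@gdeg R G).

Definition fG (z : 'rV[R]_(n + n)) : 'rV[R]_n := mul (lsubmx z) (rsubmx z).

Lemma fG_row u v : fG (row_mx u v) = mul u v.
Proof. by rewrite /fG row_mxKl row_mxKr. Qed.

Definition ev (m : 'I_n) : 'rV[R]_n := delta_mx ord0 m.
Definition wv (m : 'I_n) : 'rV[R]_(n + n) := row_mx 0 (ev m).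

Lemma fG_derivable z w : derivable fG z w.
Proof. exact: ((@gmul_smooth R G [::]).2 w z I). Qed.

Lemma fG_Dcont m z : {for z, continuous (fun y => derive fG y (wv m))}.
Proof. exact: ((@gmul_smooth R G [:: wv m]).1 z I). Qed.

Lemma fG_D0 m : derive fG 0 (wv m) = ev m.
Proof.
rewrite /derive; apply: norm_lim_near_cst.
near=> h.
have h0 : h != 0 by near: h; exact: nbhs_dnbhs_neq.
rewrite /= /shift addr0 /wv scale_row_mx scaler0.
have f0 : fG 0 = 0 by have := fG_row 0 0; rewrite row_mx0 gmul0x.
by rewrite f0 fG_row gmul0x subr0 scalerA mulVf // scale1r.
Unshelve. all: by end_near.
Qed.

Lemma norm_row_mx_lt (a b : 'rV[R]_n) e : `|a| < e -> `|b| < e -> `|row_mx a b| < e.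
Proof.
move=> ha hb; have e0 : 0 < e by apply: le_lt_trans ha.
apply: mx_norm_lt => // i j; rewrite -[j]splitK; case: (fintype.split j) => j' /=.
  by rewrite row_mxEl; exact: le_lt_trans (mxE_le _ _ _) ha.
by rewrite row_mxEr; exact: le_lt_trans (mxE_le _ _ _) hb.
Qed.

End Struct.
Section B1.
Variable R : realType.
Variable G : graded_group R.
Local Notation n := (gdim G).
Local Notation mul := (@gmul R G).
Local Notation deg := (@gdeg R G).

Lemma B1 k (eta : R) : 0 < eta -> exists2 dl, 0 < dl & forall u v : 'rV[R]_n,
  `|u| < dl -> `|v| < dl ->
  `|mul u v ord0 k - u ord0 k - v ord0 k| <= n%:R * eta * `|v|.
Proof.
move=> eta0.
have Hm : forall m, \forall z \near (0 : 'rV[R]_(n+n)), `|derive (@fG R G) z (wv m) - ev m| < eta.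
  move=> m; have := @fG_Dcont R G m 0; move=> /cvgrPdist_lt /(_ eta eta0).
  rewrite fG_D0; apply: filterS => z; by rewrite distrC.
have Hn := @filter_forall _ _ _ (nbhs (0:'rV[R]_(n+n))) _ Hm.
have {}Hn := Hn (nbhs_filter _).
have [dl dl0 Hdl] := (iffLR (nbhs_ballP _ _)) Hn.
exists dl => // u v hu hv.
pose vt t := \row_l (if (l < t)%N then v ord0 l else 0) : 'rV[R]_n.
pose g w := mul u w ord0 k - u ord0 k - w ord0 k.
suff S : forall t, `|g (vt t)| <= t%:R * eta * `|v|.
  have Ev : vt n = v by apply/rowP => l; rewrite mxE ltn_ord.
  by have := S n; rewrite Ev.
elim => [|t IH].
  have -> : vt 0%N = 0 by apply/rowP => l; rewrite !mxE.
  by rewrite /g gmulx0 mxE subrr subr0 normr0 !mul0r.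
case: (ltnP t n) => [tn|nt]; last first.
  have -> : vt t.+1 = vt t.
    apply/rowP => l; rewrite !mxE.
    by rewrite (leq_trans (ltn_ord l) nt) (leq_trans (ltn_ord l) (leqW nt)).
  apply: le_trans IH _; apply: ler_wpM2r => //; apply: ler_wpM2r; first exact: ltW.
  by rewrite ler_nat.
pose m := Ordinal tn.
pose b := v ord0 m.
have Evt : vt t.+1 = vt t + b *: ev m.
  apply/rowP => l; rewrite !mxE eqxx /=.
  case: (eqVneq l m) => [->|lm] /=.
    by rewrite ltnn ltnSn add0r mulr1.
  rewrite mulr0 addr0 ltnS leq_eqVlt.
  have -> : (l == t :> nat) = false by apply/negP => /eqP lt; move/eqP: lm; apply; exact: val_inj.
  by [].
pose h1 s := mul u (vt t + s *: ev m) ord0 k.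
pose d1 s := derive (@fG R G) (s *: wv m + row_mx u (vt t)) (wv m) ord0 k.
have Erow s : s *: wv m + row_mx u (vt t) = row_mx u (vt t + s *: ev m).
  by rewrite /wv scale_row_mx scaler0 add_row_mx add0r addrC.
have Dh (s : R) : is_derive s 1 h1 (d1 s).
  have [D1 D2] := line_derivable (z0 := row_mx u (vt t)) (w := wv m) (s := s) (@fG_derivable R G _ _).
  have := coord_derive k D1; rewrite D2.
  have E : (fun t0 : R => fG (t0 *: wv m + row_mx u (vt t)) ord0 k) = h1.
    by apply/funext => s'; rewrite Erow fG_row.
  by rewrite E.
have Hd (s : R) : `|s| <= `|b| -> `|d1 s - ev m ord0 k| < eta.
  move=> sb.
  have B : ball (0 : 'rV[R]_(n+n)) dl (s *: wv m + row_mx u (vt t)).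
    rewrite -ball_normE /ball_ /= sub0r normrN Erow.
    apply: norm_row_mx_lt => //.
    apply: mx_norm_lt => // i l; rewrite (ord1 i) !mxE eqxx /=.
    have vb : `|b| < dl by apply: le_lt_trans (mxE_le _ _ _) hv.
    case: (eqVneq l m) => [->|lm] /=.
      by rewrite ltnn add0r mulr1; apply: le_lt_trans sb vb.
    rewrite mulr0 addr0; case: ifP => _; last by rewrite normr0.
    exact: le_lt_trans (mxE_le _ _ _) hv.
  have := Hdl _ B => /(_ m) H.
  apply: le_lt_trans H; apply: le_trans (mxE_le _ ord0 k); by rewrite !mxE.
have cont : forall a c : R, {within `[a, c], continuous h1}.
  move=> a c; apply: derivable_within_continuous => x _; by case: (Dh x).
have key : `|h1 b - h1 0 - b * ev m ord0 k| <= eta * `|b|.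
  case: (lerP 0 b) => hb.
    have [c hc E] := MVT_segment hb (fun x _ => Dh x) (cont 0 b).
    move: hc; rewrite in_itv /= => /andP [c0 cb].
    have -> : h1 b - h1 0 - b * ev m ord0 k = (d1 c - ev m ord0 k) * b.
      by rewrite E; ring.
    rewrite normrM; apply: ler_wpM2r; first exact: normr_ge0.
    apply: ltW; apply: Hd; rewrite !ger0_norm //; exact: le_trans cb.
  have [c hc E] := MVT_segment (ltW hb) (fun x _ => Dh x) (cont b 0).
  move: hc; rewrite in_itv /= => /andP [bc c0].
  have -> : h1 b - h1 0 - b * ev m ord0 k = (d1 c - ev m ord0 k) * b.
    have -> : h1 b - h1 0 = - (h1 0 - h1 b) by rewrite opprB.
    by rewrite E; ring.
  rewrite normrM; apply: ler_wpM2r; first exact: normr_ge0.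
  apply: ltW; apply: Hd; rewrite !ler0_norm ?lerN2 //; exact: ltW.
have Eg : g (vt t.+1) = g (vt t) + (h1 b - h1 0 - b * ev m ord0 k).
  rewrite /g /h1 Evt scale0r addr0 !mxE; ring.
rewrite Eg; apply: le_trans (ler_normD _ _) _.
have vb : `|b| <= `|v| by exact: mxE_le.
apply: le_trans (lerD IH (le_trans key (ler_wpM2l (ltW eta0) vb))) _.
by rewrite -natr1; apply/eqP; rewrite eq_le (_ : t%:R * eta * `|v| + eta * `|v| = (t%:R + 1) * eta * `|v|) ?lexx //; ring.
Qed.

End B1.
Section Bstar.
Variable R : realType.
Variable G : graded_group R.
Local Notation n := (gdim G).
Local Notation mul := (@gmul R G).
Local Notation deg := (@gdeg R G).

Lemma dil_small (r : R) e (w : 'rV[R]_n) : 0 < r -> r <= 1 ->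
  (forall l, (deg l < e)%N -> w ord0 l = 0) -> `|dil deg r w| <= r ^+ e * `|w|.
Proof.
move=> r0 r1 Hw; apply: mx_norm_le.
  by apply: mulr_ge0; [exact: exprn_ge0 (ltW r0)|exact: normr_ge0].
move=> i l; rewrite (ord1 i) mxE.
case: (ltnP (deg l) e) => [/Hw ->|el]; first by rewrite mulr0 normr0; apply: mulr_ge0; [apply: exprn_ge0; exact: ltW|exact: normr_ge0].
rewrite normrM; apply: ler_pM; [exact: normr_ge0|exact: normr_ge0| |exact: mxE_le].
rewrite ger0_norm; last by apply: exprn_ge0; exact: ltW.
exact: (ler_wiXn2l (ltW r0) r1 el).
Qed.

Lemma Bstar k (a b : 'rV[R]_n) :
  (forall l, (deg l < deg k)%N -> a ord0 l = 0 /\ b ord0 l = 0) ->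
  mul a b ord0 k = a ord0 k + b ord0 k.
Proof.
move=> Hab.
set X := mul a b ord0 k - a ord0 k - b ord0 k.
suff : `|X| <= 0.
  by rewrite normr_le0 /X subr_eq0 subr_eq => /eqP ->; rewrite addrC.
suff H : forall eta, 0 < eta -> `|X| <= n%:R * eta * `|b|.
  apply/ler_addgt0Pr => e e0; rewrite add0r.
  have n0 : (0 < n)%N by apply: leq_ltn_trans (ltn_ord k).
  have Hp : 0 < n%:R * (`|b| + 1) by apply: mulr_gt0; [rewrite ltr0n|apply: ltr_wpDl].
  apply: le_trans (H (e / (n%:R * (`|b| + 1))) _) _; first by apply: divr_gt0.
  have b10 : 0 < `|b| + 1 by apply: ltr_wpDl.
  have -> : n%:R * (e / (n%:R * (`|b| + 1))) * `|b| = e * (`|b| / (`|b| + 1)).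
    by field; apply/andP; split; [exact: lt0r_neq0|rewrite pnatr_eq0 -lt0n].
  apply: ler_piMr; first exact: ltW.
  by rewrite ler_pdivrMr // mul1r lerDl.
move=> eta eta0.
have [dl dl0 Hdl] := B1 k eta0.
set r := dl / (`|a| + `|b| + dl).
have den0 : 0 < `|a| + `|b| + dl by apply: ltr_wpDl => //; apply: addr_ge0.
have r0 : 0 < r by apply: divr_gt0.
have r1 : r <= 1 by rewrite ler_pdivrMr // mul1r lerDr addr_ge0.
have ek : (1 <= deg k)%N by exact: gdeg_pos.
have rek : r ^+ deg k <= r by rewrite -[X in _ <= X]expr1; exact: (ler_wiXn2l (ltW r0) r1 ek).
have sm : forall w : 'rV[R]_n, `|w| <= `|a| + `|b| -> (forall l, (deg l < deg k)%N -> w ord0 l = 0) ->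
    `|dil deg r w| < dl.
  move=> w hw Hw; apply: le_lt_trans (dil_small r0 r1 Hw) _.
  apply: le_lt_trans (ler_wpM2r (normr_ge0 _) rek) _.
  apply: le_lt_trans (ler_wpM2l (ltW r0) hw) _.
  by rewrite /r mulrAC ltr_pdivrMr // ltr_pM2l // ltrDl.
have ha : `|dil deg r a| < dl by apply: sm; [rewrite lerDl|move=> l /Hab []].
have hb : `|dil deg r b| < dl by apply: sm; [rewrite lerDr|move=> l /Hab []].
have := Hdl _ _ ha hb.
rewrite -gmul_dil // !mxE.
have -> : r ^+ deg k * mul a b ord0 k - r ^+ deg k * a ord0 k - r ^+ deg k * b ord0 k
   = r ^+ deg k * X by rewrite /X; ring.
rewrite normrM ger0_norm; last by apply: exprn_ge0; exact: ltW.
move=> H.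
have rk0 : 0 < r ^+ deg k by apply: exprn_gt0.
rewrite -(ler_pM2l rk0); apply: le_trans H _.
rewrite mulrCA; apply: ler_wpM2l; first by apply: mulr_ge0; [rewrite ler0n|exact: ltW].
exact: (dil_small (e := deg k) r0 r1 (fun l hl => proj2 (Hab l hl))).
Qed.

End Bstar.
Section Decomp.
Variable R : realType.

Definition cont_at (p q : nat) (f : 'rV[R]_p -> 'rV[R]_q) z0 :=
  forall e, 0 < e -> exists2 d, 0 < d & forall z, `|z - z0| < d -> `|f z - f z0| < e.

Lemma cont_at_comp p q r (f : 'rV[R]_p -> 'rV[R]_q) (g : 'rV[R]_q -> 'rV[R]_r) z0 :
  cont_at f z0 -> cont_at g (f z0) -> cont_at (fun z => g (f z)) z0.
Proof.
move=> cf cg e e0; have [d1 d10 H1] := cg e e0; have [d2 d20 H2] := cf d1 d10.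
by exists d2 => // z /H2 /H1.
Qed.

Lemma cont_at_lip p q (f : 'rV[R]_p -> 'rV[R]_q) z0 :
  (forall z, `|f z - f z0| <= `|z - z0|) -> cont_at f z0.
Proof. by move=> H e e0; exists e => // z hz; apply: le_lt_trans (H z) hz. Qed.

Variable G : graded_group R.
Local Notation n := (gdim G).
Local Notation mul := (@gmul R G).
Local Notation deg := (@gdeg R G).

Lemma mul_cont (a b : 'rV[R]_n) e : 0 < e -> exists2 d, 0 < d &
  forall a' b', `|a' - a| < d -> `|b' - b| < d -> `|mul a' b' - mul a b| < e.
Proof.
move=> e0.
have C := ((@gmul_smooth R G [::]).1 (row_mx a b) I).
have N := (iffLR (cvgrPdist_lt _ _) C) e e0.
have [d d0 Hd] := (iffLR (nbhs_ballP _ _)) (N (nbhs_filter _)).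
exists d => // a' b' ha hb.
have B : ball (row_mx a b) d (row_mx a' b').
  rewrite -ball_normE /ball_ /= opp_row_mx add_row_mx.
  by apply: norm_row_mx_lt; rewrite distrC.
have := Hd _ B; rewrite /= !row_mxKl !row_mxKr distrC; exact.
Qed.

Lemma cont_at_mul p (f g : 'rV[R]_p -> 'rV[R]_n) z0 :
  cont_at f z0 -> cont_at g z0 -> cont_at (fun z => mul (f z) (g z)) z0.
Proof.
move=> cf cg e e0; have [d d0 Hd] := mul_cont (f z0) (g z0) e0.
have [d1 d10 H1] := cf d d0; have [d2 d20 H2] := cg d d0.
exists (Num.min d1 d2); first by rewrite lt_min d10.
by move=> z; rewrite lt_min => /andP [/H1 h1 /H2 h2]; apply: Hd.
Qed.

Definition prG (j : nat) (w : 'rV[R]_n) : 'rV[R]_n :=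
  \row_k (if deg k == j then w ord0 k else 0).

Lemma prG_lip j (w w' : 'rV[R]_n) : `|prG j w - prG j w'| <= `|w - w'|.
Proof.
apply: mx_norm_le => // i l; rewrite (ord1 i) !mxE.
case: ifP => _; last by rewrite subrr normr0.
by have := mxE_le (w - w') ord0 l; rewrite !mxE.
Qed.

Lemma prG_layer j w : in_layer j (prG j w).
Proof. by move=> k /negbTE hk; rewrite mxE hk. Qed.

Fixpoint rest (t : nat) (z : 'rV[R]_n) : 'rV[R]_n :=
  match t with
  | 0 => z
  | t'.+1 => mul (- prG t (rest t' z)) (rest t' z)
  end.

Definition Pt t z := prG t.+1 (rest t z).

Lemma rest_low t z l : (deg l <= t)%N -> rest t z ord0 l = 0.
Proof.
elim: t l => [|t IH] l hl.
  by move: hl; rewrite leqn0 => /eqP hl0; have := gdeg_pos l; rewrite hl0.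
rewrite /= Bstar.
  rewrite !mxE; case: eqP => [_|dl]; first by rewrite addNr.
  rewrite oppr0 add0r; apply: IH; rewrite -ltnS ltn_neqAle hl andbT.
  by apply/eqP.
move=> l' hl'; have hl2 : (deg l' <= t)%N by rewrite -ltnS (leq_trans hl').
split; last exact: IH.
by rewrite !mxE (_ : (deg l' == t.+1) = false) ?oppr0 //; apply/negbTE; rewrite neq_ltn ltnS hl2.
Qed.

Lemma rest_dec t z : rest t z = mul (Pt t z) (rest t.+1 z).
Proof. by rewrite /= /Pt gmulK. Qed.

Lemma Pt_layer t z : in_layer t.+1 (Pt t z).
Proof. exact: prG_layer. Qed.

Definition Nmax := (\max_(k : 'I_n) deg k)%N.

Lemma rest_N z : rest Nmax z = 0.
Proof. by apply/rowP => l; rewrite (@rest_low Nmax z l) ?mxE //; exact: leq_bigmax. Qed.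

Lemma rest_cont t z0 : cont_at (rest t) z0.
Proof.
elim: t => [|t IH]; first exact: cont_at_lip.
change (cont_at (fun z => mul (- prG t.+1 (rest t z)) (rest t z)) z0).
apply: (cont_at_mul (f := fun z => - prG t.+1 (rest t z)) (g := rest t)) => //.
apply: (cont_at_comp (f := rest t) (g := fun w => - prG t.+1 w)) => //.
apply: cont_at_lip => w; rewrite -opprD normrN; exact: prG_lip.
Qed.

Lemma Pt_cont t z0 : cont_at (Pt t) z0.
Proof.
apply: (cont_at_comp (f := rest t)); first exact: rest_cont.
apply: cont_at_lip => w; exact: prG_lip.
Qed.

End Decomp.
Section Forward.
Variable R : realType.
Variables G H : graded_group R.
Variable U : set 'rV[R]_(gdim G).
Variable Phi : 'rV[R]_(gdim G) -> 'rV[R]_(gdim H).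

Lemma pr_layer_lip i (a b : 'rV[R]_(gdim H)) : `|pr_layer i a - pr_layer i b| <= `|a - b|.
Proof.
apply: mx_norm_le => // r l; rewrite (ord1 r) !mxE.
case: ifP => _; last by rewrite subrr normr0.
by have := mxE_le (a - b) ord0 l; rewrite !mxE.
Qed.

Lemma forward : unif_Pansu_diff U Phi ->
   forall i j : nat, (0 < i)%N -> (0 < j)%N ->
     exists L : 'rV[R]_(gdim G) * 'rV[R]_(gdim G) -> 'rV[R]_(gdim H),
       loc_unif_cvg0
         (fun p : 'rV[R]_(gdim G) * 'rV[R]_(gdim G) => U p.1 /\ in_layer j p.2)
         (fun eps p => eps ^- i *: pr_layer i (transl Phi p.1 (eps ^+ j *: p.2)))
         L.
Proof.
move=> [PD HPD] i j i0 j0.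
exists (fun p => pr_layer i (PD p.1 p.2)).
move=> p [Up _]; have [W HW HWe] := HPD p Up.
exists W => // e e0.
have := HWe e e0; apply: filter_app; near=> eps => Hq q Wq [Uq Lq].
have eps0 : 0 < eps by near: eps; exact: nbhs_right_gt.
apply: le_lt_trans (Hq q Wq Uq).
have -> : eps ^- i *: pr_layer i (transl Phi q.1 (eps ^+ j *: q.2)) =
    pr_layer i (dil (@gdeg R H) eps^-1 (transl Phi q.1 (dil (@gdeg R G) eps q.2))).
  rewrite (dil_layer _ Lq); apply/rowP => l; rewrite !mxE.
  by case: eqP => [->|_]; rewrite ?mulr0 // exprVn.
exact: pr_layer_lip.
Unshelve. all: by end_near.
Qed.

End Forward.
Section Topo.
Variable R : realType.

Definition box (n : nat) (p : 'rV[R]_n * 'rV[R]_n) (r : R) (q : 'rV[R]_n * 'rV[R]_n) :=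
  `|q.1 - p.1| < r /\ `|q.2 - p.2| < r.

Lemma nbhs_box n (p : 'rV[R]_n * 'rV[R]_n) W : nbhs p W ->
  exists2 r, 0 < r & forall q, box p r q -> W q.
Proof.
move=> /(iffLR (nbhs_ballP _ _)) [r r0 Hr]; exists r => // q [h1 h2]; apply: Hr.
by split; rewrite -ball_normE /ball_ /= distrC.
Qed.

Lemma box_nbhs n (p : 'rV[R]_n * 'rV[R]_n) r : 0 < r -> nbhs p (box p r).
Proof.
move=> r0; apply/(iffRL (nbhs_ballP _ _)); exists r => // q [h1 h2].
by move: h1 h2; rewrite -!ball_normE /ball_ /= => h1 h2; split; rewrite distrC.
Qed.

Lemma near0P (P : R -> Prop) : (\forall eps \near 0^'+, P eps) ->
  exists2 d, 0 < d & forall eps, 0 < eps -> eps < d -> P eps.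
Proof.
move=> /(iffLR (nbhs_ballP _ _)) [d d0 Hd]; exists d => // eps e0 ed.
apply: Hd => //; rewrite -ball_normE /ball_ /= sub0r normrN gtr0_norm //.
Qed.

Lemma near0P' (P : R -> Prop) : (exists2 d, 0 < d & forall eps, 0 < eps -> eps < d -> P eps) ->
  \forall eps \near 0^'+, P eps.
Proof.
move=> [d d0 Hd]; near=> eps; apply: Hd.
  by near: eps; exact: nbhs_right_gt.
by near: eps; exact: nbhs_right_lt.
Unshelve. all: by end_near.
Qed.

End Topo.
Section Compact.
Variable R : realType.

Lemma open_ball n (U : set 'rV[R]_n) x : open U -> U x ->
  exists2 r, 0 < r & forall y, `|y - x| < r -> U y.
Proof.
move=> oU Ux; have := @open_nbhs_nbhs _ x U (conj oU Ux).
move=> /(iffLR (nbhs_ballP _ _)) [r r0 Hr]; exists r => // y hy; apply: Hr.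
by rewrite -ball_normE /ball_ /= distrC.
Qed.

Lemma cube_compact n (c : 'rV[R]_n) r :
  compact [set v : 'rV[R]_n | forall i, `[c ord0 i - r, c ord0 i + r]%classic (v ord0 i)].
Proof.
apply: (@rV_compact _ _ (fun i => `[c ord0 i - r, c ord0 i + r]%classic)) => i.
exact: segment_compact.
Qed.

Lemma unif_from_local n m (U : set 'rV[R]_n) (F : R -> 'rV[R]_n * 'rV[R]_n -> 'rV[R]_m) L :
  open U ->
  (forall p, U p.1 -> forall e, 0 < e -> exists2 d, 0 < d & forall eps q,
      0 < eps -> eps < d -> box p d q -> U q.1 -> `|F eps q - L q| < e) ->
  loc_unif_cvg0 (fun p => U p.1) F L.
Proof.
move=> oU HL p Up.
have [rho rho0 Hrho] := open_ball oU Up.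
set r := rho / 2.
have r0 : 0 < r by apply: divr_gt0.
have rrho : r < rho by rewrite /r ltr_pdivrMr // ltr_pMr // ltr1n.
exists (box p r); first exact: box_nbhs.
move=> e e0.
set K1 := [set v : 'rV[R]_n | forall i, `[p.1 ord0 i - r, p.1 ord0 i + r]%classic (v ord0 i)].
set K2 := [set v : 'rV[R]_n | forall i, `[p.2 ord0 i - r, p.2 ord0 i + r]%classic (v ord0 i)].
have cK : compact (K1 `*` K2) by apply: compact_setX; exact: cube_compact.
have inK : forall (c v : 'rV[R]_n), `|v - c| <= r ->
    forall i, `[c ord0 i - r, c ord0 i + r]%classic (v ord0 i).
  move=> c v hv i; rewrite /= in_itv /= -ler_distlC distrC.
  by apply: le_trans hv; have := mxE_le (v - c) ord0 i; rewrite !mxE.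
have outK : forall (c v : 'rV[R]_n), (forall i, `[c ord0 i - r, c ord0 i + r]%classic (v ord0 i)) ->
    `|v - c| <= r.
  move=> c v hv; apply: mx_norm_le; first exact: ltW.
  move=> i l; rewrite (ord1 i) !mxE distrC ler_distlC; exact: hv.
have := (iffLR (compact_near_coveringP _) cK) R (0^'+)
   (fun eps q => U q.1 -> `|F eps q - L q| < e) _.
move=> /(_ _) H.
have {}H : \forall eps \near 0^'+, (K1 `*` K2) `<=` (fun q => U q.1 -> `|F eps q - L q| < e).
  apply: H => q0 [/outK Kq1 _].
  have Uq0 : U q0.1 by apply: Hrho; apply: le_lt_trans Kq1 rrho.
  have [d d0 Hd] := HL q0 Uq0 e e0.
  exists (box q0 d, [set eps : R | 0 < eps < d]).
    split; first exact: box_nbhs.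
    apply: near0P'; exists d => // eps e1 e2 /=; by rewrite e1 e2.
  by move=> [q eps] [/= Bq /andP [e1 e2]] Uq; apply: Hd.
apply: filterS H => eps HK q [B1 B2] Uq; apply: HK => //.
by split; apply: inK; apply: ltW.
Qed.

End Compact.
Section DilCont.
Variable R : realType.
Variable K : graded_group R.

Lemma dil_cont (c : R) (w0 : 'rV[R]_(gdim K)) : cont_at (dil (@gdeg R K) c) w0.
Proof.
set C := (1 + `|c|) ^+ (@Nmax R K).
have C1 : 1 <= C by apply: exprn_ege1; rewrite lerDl.
have C0 : 0 < C by apply: lt_le_trans C1.
have lip : forall w, `|dil (@gdeg R K) c w - dil (@gdeg R K) c w0| <= C * `|w - w0|.
  move=> w; apply: mx_norm_le; first by apply: mulr_ge0; [exact: ltW|exact: normr_ge0].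
  move=> i l; rewrite (ord1 i) !mxE -mulrBr normrM normrX.
  apply: ler_pM; [exact: exprn_ge0|exact: normr_ge0| |].
    apply: le_trans (_ : (1 + `|c|) ^+ gdeg l <= C).
      by apply: lerXn2r; rewrite ?nnegrE ?addr_ge0 // lerDr.
    by apply: ler_weXn2l; [rewrite lerDl|exact: leq_bigmax].
  by have := mxE_le (w - w0) ord0 l; rewrite !mxE.
move=> e e0; exists (e / C); first by apply: divr_gt0.
move=> w hw; apply: le_lt_trans (lip w) _.
by rewrite mulrC -ltr_pdivlMr.
Qed.

Lemma dil_le1 (r : R) (w : 'rV[R]_(gdim K)) : 0 < r -> r <= 1 ->
  `|dil (@gdeg R K) r w| <= r * `|w|.
Proof.
move=> r0 r1; have := @dil_small R K r 1 w r0 r1; rewrite expr1; apply.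
by move=> l; rewrite ltnS leqn0 => /eqP hl; have := gdeg_pos l; rewrite hl.
Qed.

End DilCont.
Section Backward.
Variable R : realType.
Variables G H : graded_group R.
Variable U : set 'rV[R]_(gdim G).
Variable Phi : 'rV[R]_(gdim G) -> 'rV[R]_(gdim H).
Hypothesis oU : open U.
Hypothesis sPhi : smooth_on U Phi.
Local Notation n := (gdim G).
Local Notation m := (gdim H).
Local Notation VG := ('rV[R]_n).
Local Notation VH := ('rV[R]_m).
Local Notation mulG := (@gmul R G).
Local Notation mulH := (@gmul R H).
Local Notation degG := (@gdeg R G).
Local Notation degH := (@gdeg R H).

Lemma Phi_cont x : U x -> forall e, 0 < e -> exists2 d, 0 < d &
  forall y, `|y - x| < d -> `|Phi y - Phi x| < e.
Proof.
move=> Ux e e0.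
have C := ((sPhi [::]).1 x Ux).
have N := (iffLR (cvgrPdist_lt _ _) C) e e0.
have [d d0 Hd] := (iffLR (nbhs_ballP _ _)) (N (nbhs_filter _)).
exists d => // y hy.
have B : ball x d y by rewrite -ball_normE /ball_ /= distrC.
by have := Hd _ B; rewrite /= distrC.
Qed.

Lemma small_shift x0 rho : 0 < rho -> exists2 d, 0 < d &
  forall x w, `|x - x0| < d -> `|w| < d -> `|mulG x w - x0| < rho.
Proof.
move=> rho0; have [d d0 Hd] := mul_cont x0 0 rho0.
exists d => // x w hx hw; have := Hd x w hx; rewrite subr0 gmulx0; exact.
Qed.

Lemma Fe_cont (eps : R) x0 V0 : 0 < eps -> U x0 -> U (mulG x0 (dil degG eps V0)) ->
  forall e, 0 < e -> exists2 d, 0 < d & forall x V, `|x - x0| < d -> `|V - V0| < d ->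
    `|Fe Phi eps x V - Fe Phi eps x0 V0| < e.
Proof.
move=> eps0 Ux0 Uy0 e e0.
have [d1 d10 H1] := dil_cont (eps^-1) (transl Phi x0 (dil degG eps V0)) e0.
have [d2 d20 H2] := mul_cont (- Phi x0) (Phi (mulG x0 (dil degG eps V0))) d10.
have [d3 d30 H3] := Phi_cont Ux0 d20.
have [d4 d40 H4] := Phi_cont Uy0 d20.
have [d5 d50 H5] := mul_cont x0 (dil degG eps V0) d40.
have [d6 d60 H6] := dil_cont eps V0 d50.
exists (Num.min d3 (Num.min d5 d6)); first by rewrite !lt_min d30 d50 d60.
move=> x V; rewrite !lt_min => /andP [hx3 /andP [hx5 _]] /andP [_ /andP [_ hV6]].
apply: H1; apply: H2; first by rewrite -opprD normrN; exact: H3.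
by apply: H4; apply: H5 => //; exact: H6.
Qed.

Definition Dl (j : nat) (p : VG * VG) := U p.1 /\ in_layer j p.2.
Definition Fp (eps : R) (p : VG * VG) := Fe Phi eps p.1 p.2.

Lemma tri4 (a b c d : VH) : `|a - d| <= `|a - b| + `|b - c| + `|c - d|.
Proof.
apply: le_trans (ler_distD b a d) _; rewrite -addrA lerD2l.
exact: ler_distD.
Qed.

Lemma box_center (p : VG * VG) r : 0 < r -> box p r p.
Proof. by move=> r0; split; rewrite subrr normr0. Qed.

Lemma box_min (p q : VG * VG) r r' : box p (Num.min r r') q -> box p r q /\ box p r' q.
Proof. by move=> [h1 h2]; move: h1 h2; rewrite !lt_min => /andP [? ?] /andP [? ?]. Qed.

Lemma Lcont j L : loc_unif_cvg0 (Dl j) Fp L -> forall p', Dl j p' ->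
  forall e, 0 < e -> exists2 d, 0 < d & forall q, Dl j q -> box p' d q -> `|L q - L p'| < e.
Proof.
move=> HL p' Dp' e e0.
have [W HW HWe] := HL _ Dp'.
have [r r0 Hr] := nbhs_box HW.
have e30 : 0 < e / 3 by apply: divr_gt0.
have [d0 d00 Hd0] := near0P (HWe _ e30).
case: Dp' => Ux0 LV0.
have [rho rho0 Hrho] := open_ball oU Ux0.
have [d5 d50 H5] := small_shift p'.1 rho0.
have V10 : 0 < `|p'.2| + 1 by apply: ltr_wpDl.
set c := Num.min d0 (Num.min 1 (d5 / (`|p'.2| + 1))).
have c0 : 0 < c by rewrite !lt_min d00 ltr01 divr_gt0.
set eps0 := c / 2.
have eps00 : 0 < eps0 by apply: divr_gt0.
have epsc : eps0 < c by rewrite /eps0 ltr_pdivrMr // ltr_pMr // ltr1n.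
have [ed0 [e1 ed5]] : eps0 < d0 /\ eps0 < 1 /\ eps0 < d5 / (`|p'.2| + 1).
  by move: epsc; rewrite !lt_min => /andP [-> /andP [-> ->]].
have Uy0 : U (mulG p'.1 (dil degG eps0 p'.2)).
  apply: Hrho; apply: H5; first by rewrite subrr normr0.
  apply: le_lt_trans (dil_le1 _ eps00 (ltW e1)) _.
  apply: le_lt_trans (_ : eps0 * `|p'.2| <= eps0 * (`|p'.2| + 1)) _.
    by apply: ler_wpM2l; [exact: ltW|rewrite lerDl].
  by rewrite -ltr_pdivlMr.
have [d1 d10 H1] := Fe_cont eps00 Ux0 Uy0 e30.
exists (Num.min r d1); first by rewrite lt_min r0 d10.
move=> q Dq /box_min [Bq1 [hq1 hq2]].
have Wq : W q by apply: Hr.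
have Wp : W p' by apply: Hr; exact: box_center.
have A1 := Hd0 eps0 eps00 ed0 q Wq Dq.
have A2 := Hd0 eps0 eps00 ed0 p' Wp (conj Ux0 LV0).
have A3 := H1 q.1 q.2 hq1 hq2.
apply: le_lt_trans (@tri4 (L q) (Fp eps0 q) (Fp eps0 p') (L p')) _.
rewrite distrC in A1; rewrite /Fp.
have -> : e = e / 3 + e / 3 + e / 3 by field.
by rewrite ltrD // ltrD.
Qed.

Lemma JVlayer j L : loc_unif_cvg0 (Dl j) Fp L -> forall p', Dl j p' ->
  forall e, 0 < e -> exists2 d, 0 < d & forall eps q, 0 < eps -> eps < d ->
    box p' d q -> Dl j q -> `|Fp eps q - L p'| < e.
Proof.
move=> HL p' Dp' e e0.
have e20 : 0 < e / 2 by apply: divr_gt0.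
have [W HW HWe] := HL _ Dp'.
have [r r0 Hr] := nbhs_box HW.
have [d0 d00 Hd0] := near0P (HWe _ e20).
have [d1 d10 Hd1] := Lcont HL Dp' e20.
exists (Num.min r (Num.min d0 d1)); first by rewrite !lt_min r0 d00 d10.
move=> eps q eps0; rewrite !lt_min => /andP [_ /andP [ed0 _]] /box_min [Bq /box_min [_ Bq1]] Dq.
have A1 := Hd0 eps eps0 ed0 q (Hr _ Bq) Dq.
have A2 := Hd1 q Dq Bq1.
apply: le_lt_trans (ler_distD (L q) _ _) _.
have -> : e = e / 2 + e / 2 by field.
by rewrite ltrD.
Qed.
Definition JV (Fn : R -> VG * VG -> VH) (M : VH) (p : VG * VG) :=
  forall e, 0 < e -> exists2 d, 0 < d & forall eps q, 0 < eps -> eps < d ->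
    box p d q -> U q.1 -> `|Fn eps q - M| < e.

Definition Fst (t : nat) (eps : R) (q : VG * VG) := Fe Phi eps q.1 (@rest R G t q.2).

Lemma stage_top : exists M, forall p, U p.1 -> JV (Fst (@Nmax R G)) (M p) p.
Proof.
exists (fun _ => 0) => p Up e e0; exists 1 => // eps q _ _ _ _.
by rewrite /Fst rest_N Fe0 subrr normr0.
Qed.

Lemma stage_step t : (exists L, loc_unif_cvg0 (Dl t.+1) Fp L) ->
  (exists M, forall p, U p.1 -> JV (Fst t.+1) (M p) p) ->
  exists M, forall p, U p.1 -> JV (Fst t) (M p) p.
Proof.
move=> [L HL] [M1 HM1].
exists (fun p => mulH (L (p.1, Pt t p.2)) (M1 p)).
move=> p Up e e0.
have [dm dm0 Hm] := mul_cont (L (p.1, Pt t p.2)) (M1 p) e0.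
have Dp' : Dl t.+1 (p.1, Pt t p.2) := conj Up (@Pt_layer R G t p.2).
have [d1 d10 H1] := JVlayer HL Dp' dm0.
have [d2 d20 H2] := HM1 p Up dm dm0.
have [d3 d30 H3] := @Pt_cont R G t p.2 d1 d10.
have [d6 d60 H6] := @Pt_cont R G t p.2 1 ltr01.
have [rho rho0 Hrho] := open_ball oU Up.
have rho20 : 0 < Num.min d2 rho by rewrite lt_min d20 rho0.
have [d5 d50 H5] := small_shift p.1 rho20.
have P0 : 0 < `|Pt t p.2| + 1 by apply: ltr_wpDl.
exists (Num.min d1 (Num.min d2 (Num.min d3 (Num.min d6 (Num.min d5 (Num.min 1 (d5 / (`|Pt t p.2| + 1)))))))).
  by rewrite !lt_min d10 d20 d30 d60 d50 ltr01 divr_gt0.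
move=> eps q eps0; rewrite !lt_min => /andP [ed1 /andP [ed2 /andP [_ /andP [_ /andP [_ /andP [e1 ed5]]]]]].
move=> [hq1 hq2] Uq; move: hq1 hq2; rewrite !lt_min.
move=> /andP [hx1 /andP [hx2 /andP [_ /andP [_ /andP [hx5 _]]]]].
move=> /andP [_ /andP [hz2 /andP [hz3 /andP [hz6 _]]]].
rewrite /Fst (@rest_dec R G t q.2) Fe_cocycle //.
apply: Hm.
  have := H1 eps (q.1, Pt t q.2) eps0 ed1; apply => //.
    by split => //=; apply: H3.
  by split => //; exact: Pt_layer.
set w := dil degG eps (Pt t q.2).
have hw : `|w| < d5.
  apply: le_lt_trans (dil_le1 _ eps0 (ltW e1)) _.
  have hP : `|Pt t q.2| <= `|Pt t p.2| + 1.
    have h := H6 _ hz6.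
    have h2 : `|Pt t q.2| <= `|Pt t q.2 - Pt t p.2| + `|Pt t p.2|.
      by rewrite -[X in `|X| <= _](subrK (Pt t p.2)); exact: ler_normD.
    apply: le_trans h2 _; rewrite addrC lerD2l; exact: ltW.
  apply: le_lt_trans (ler_wpM2l (ltW eps0) hP) _.
  by rewrite -ltr_pdivlMr.
have hx' := H5 q.1 w hx5 hw.
move: hx'; rewrite lt_min => /andP [hx'2 hx'rho].
have := H2 eps (mulG q.1 w, q.2) eps0 ed2; apply => //.
by apply: Hrho.
Qed.

Lemma stages : (forall j, (0 < j)%N -> exists L, loc_unif_cvg0 (Dl j) Fp L) ->
  forall k, (k <= @Nmax R G)%N ->
  exists M, forall p, U p.1 -> JV (Fst (@Nmax R G - k)) (M p) p.
Proof.
move=> HLj; elim => [|k IH] hk; first by rewrite subn0; exact: stage_top.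
have := IH (ltnW hk); rewrite -(subnSK hk); apply: stage_step.
exact: HLj.
Qed.

Lemma local_of_JV Fn M : (forall p, U p.1 -> JV Fn (M p) p) ->
  forall p, U p.1 -> forall e, 0 < e -> exists2 d, 0 < d & forall eps q,
      0 < eps -> eps < d -> box p d q -> U q.1 -> `|Fn eps q - M q| < e.
Proof.
move=> HM p Up e e0.
have e40 : 0 < e / 4 by apply: divr_gt0.
have [d d0 Hd] := HM p Up _ e40.
exists d => // eps q eps0 ed Bq Uq.
have [d' d'0 Hd'] := HM q Uq _ e40.
set eps' := Num.min d d' / 2.
have m0 : 0 < Num.min d d' by rewrite lt_min d0 d'0.
have eps'0 : 0 < eps' by apply: divr_gt0.
have eps'm : eps' < Num.min d d' by rewrite /eps' ltr_pdivrMr // ltr_pMr // ltr1n.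
move: eps'm; rewrite lt_min => /andP [e'd e'd'].
have A1 := Hd eps q eps0 ed Bq Uq.
have A2 := Hd eps' q eps'0 e'd Bq Uq.
have A3 := Hd' eps' q eps'0 e'd' (box_center q d'0) Uq.
apply: le_lt_trans (@tri4 (Fn eps q) (M p) (Fn eps' q) (M q)) _.
rewrite distrC in A2.
lra.
Qed.

Lemma hyp_conv : (forall i j : nat, (0 < i)%N -> (0 < j)%N ->
     exists L : VG * VG -> VH,
       loc_unif_cvg0 (fun p : VG * VG => U p.1 /\ in_layer j p.2)
         (fun eps p => eps ^- i *: pr_layer i (transl Phi p.1 (eps ^+ j *: p.2))) L) ->
  forall j, (0 < j)%N -> exists L, loc_unif_cvg0 (Dl j) Fp L.
Proof.
move=> Hyp j j0.
have HC : forall i, exists L : VG * VG -> VH, (0 < i)%N -> loc_unif_cvg0 (Dl j)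
      (fun eps p => eps ^- i *: pr_layer i (transl Phi p.1 (eps ^+ j *: p.2))) L.
  move=> i; case: (ltnP 0 i) => [i0|]; first by have [L HL] := Hyp i j i0 j0; exists L.
  by rewrite leqn0 => /eqP ->; exists (fun _ => 0).
have [Lf HLf] := choice HC.
exists (fun p => \row_k (Lf (degH k) p ord0 k)).
move=> p Dp.
have HW : forall k : 'I_m, exists W, nbhs p W /\ forall e, 0 < e ->
    \forall eps \near 0^'+, forall q, W q -> Dl j q ->
      `|eps ^- degH k *: pr_layer (degH k) (transl Phi q.1 (eps ^+ j *: q.2))
         - Lf (degH k) q| < e.
  move=> k; have [W HW HWe] := HLf (degH k) (gdeg_pos k) p Dp; by exists W.
have [Wf HWf] := choice HW.
exists (fun q => forall k, Wf k q).
  exact: (@filter_forall _ _ (fun k q => Wf k q) (nbhs p) (nbhs_filter _) (fun k => (HWf k).1)).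
move=> e e0.
have HH := @filter_forall _ _ _ (0^'+ : set_system R) (at_right_proper_filter 0) (fun k => (HWf k).2 e e0).
apply: filterS HH => eps Hk q Wq Dq.
apply: mx_norm_lt => // i k; rewrite (ord1 i).
have := Hk k q (Wq k) Dq; apply: le_lt_trans.
apply: le_trans (mxE_le _ ord0 k); rewrite !mxE eqxx /Fp /Fe (dil_layer _ Dq.2) exprVn.
by [].
Qed.

Lemma backward : (forall i j : nat, (0 < i)%N -> (0 < j)%N ->
     exists L : VG * VG -> VH,
       loc_unif_cvg0 (fun p : VG * VG => U p.1 /\ in_layer j p.2)
         (fun eps p => eps ^- i *: pr_layer i (transl Phi p.1 (eps ^+ j *: p.2))) L) ->
  unif_Pansu_diff U Phi.
Proof.
move=> Hyp; have HLj := hyp_conv Hyp.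
have [M HM] := stages HLj (leqnn (@Nmax R G)).
rewrite subnn in HM.
exists (fun x z => M (x, z)).
have -> : (fun p : VG * VG => M (p.1, p.2)) = M by apply/funext => -[].
apply: unif_from_local oU _.
exact: local_of_JV HM.
Qed.
End Backward.

Unset Implicit Arguments.

Theorem proposition2p8 (R : realType) (G H : graded_group R)
  (U : set 'rV[R]_(gdim G)) (Phi : 'rV[R]_(gdim G) -> 'rV[R]_(gdim H)) :
  open U -> smooth_on U Phi ->
  (unif_Pansu_diff U Phi <->
   forall i j : nat, (0 < i)%N -> (0 < j)%N ->
     exists L : 'rV[R]_(gdim G) * 'rV[R]_(gdim G) -> 'rV[R]_(gdim H),
       loc_unif_cvg0
         (fun p : 'rV[R]_(gdim G) * 'rV[R]_(gdim G) => U p.1 /\ in_layer j p.2)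
         (fun eps p => eps ^- i *: pr_layer i (transl Phi p.1 (eps ^+ j *: p.2)))
         L).
Proof.
move=> oU sPhi; split.
  exact: forward.
exact: (backward oU sPhi).
Qed.
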